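(* Let $R$ be an artinian ring and $\mathcal{S}$ a full subcategory of $\operatorname{Mod}R$ which is closed under direct sums and submodules and contains $R_R$, such that $\mathcal{S}$ has only finitely many indecomposable finitely generated objects up to isomorphism, say $M_1,\dots,M_n$. Let $M=M_1\oplus\cdots\oplus M_n$, $E=\operatorname{End}(M_R)$, $X\in\mathcal{S}$, $H=\operatorname{Hom}_R(M,X)$, $p:M^{(H)}\to X$, $(m_h)\mapsto\sum_h h(m_h)$, and $K=\ker p$. Then applying $\operatorname{Hom}_R(M,-)$ to $0\to K\to M^{(H)}\xrightarrow{p}X\to0$ yields a pure exact sequence of right $E$-modules $0\to\operatorname{Hom}_R(M,K)\to\operatorname{Hom}_R(M,M^{(H)})\to\operatorname{Hom}_R(M,X)\to0.$
   Context: $\operatorname{Hom}_R(M,Y)$ is a right $E$-module via composition, $(\varphi\cdot s)(m)=\varphi(s(m))$. A short exact sequence $0\to A\to B\xrightarrow{g}C\to0$ of right modules over a ring is pure exact if $\operatorname{Hom}(N,g)$ is surjective for every finitely presented right module $N$. *)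

(* Defs.v *)
From HB Require Import structures.
From mathcomp Require Import all_boot all_order all_algebra.
Set Implicit Arguments. Unset Strict Implicit. Unset Printing Implicit Defensive.
Import GRing.Theory.
Local Open Scope ring_scope.

(* Right R-modules are represented as left modules over the converse ring R^c:
   for x : V and a : R, the right action x.a is written  a *: x  (in R^c). *)

Section Defs.
Variable R : nzRingType.

Definition right_ideal (I : R -> Prop) :=
  I 0 /\ (forall x y, I x -> I y -> I (x + y)) /\ (forall x r, I x -> I (x * r)).
Definition left_ideal (I : R -> Prop) :=
  I 0 /\ (forall x y, I x -> I y -> I (x + y)) /\ (forall x r, I x -> I (r * x)).

Definition artinian :=
  (forall I : nat -> R -> Prop, (forall n, right_ideal (I n)) ->
     (forall n x, I n.+1 x -> I n x) ->
     exists n, forall m x, (n <= m)%N -> (I m x <-> I n x)) /\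
  (forall I : nat -> R -> Prop, (forall n, left_ideal (I n)) ->
     (forall n x, I n.+1 x -> I n x) ->
     exists n, forall m x, (n <= m)%N -> (I m x <-> I n x)).

Definition rlin (U V : lmodType R^c) (f : U -> V) :=
  forall (a : R^c) (x y : U), f (a *: x + y) = a *: f x + f y.

Definition riso (U V : lmodType R^c) :=
  exists f : U -> V, rlin f /\ bijective f.

Definition submod (V : lmodType R^c) (A : V -> Prop) :=
  A 0 /\ forall (a : R^c) x y, A x -> A y -> A (a *: x + y).

Definition fin_gen (V : lmodType R^c) :=
  exists n (g : 'I_n -> V), forall v : V,
    exists r : 'I_n -> R^c, v = \sum_(k < n) r k *: g k.

Definition indecomposable (V : lmodType R^c) :=
  (exists v : V, v <> 0) /\
  forall A B : V -> Prop, submod A -> submod B ->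
    (forall v, A v -> B v -> v = 0) ->
    (forall v, exists a b, A a /\ B b /\ v = a + b) ->
    (forall v, A v -> v = 0) \/ (forall v, B v -> v = 0).

Definition is_dsum (I : Type) (F : I -> lmodType R^c) (D : lmodType R^c)
    (u : forall i, F i -> D) :=
  (forall i, rlin (u i)) /\
  (forall d : D, exists n (iota : 'I_n -> I) (x : forall k, F (iota k)),
       d = \sum_(k < n) u (iota k) (x k)) /\
  (forall n (iota : 'I_n -> I) (x : forall k, F (iota k)), injective iota ->
       \sum_(k < n) u (iota k) (x k) = 0 -> forall k, x k = 0).

Definition closed_dsum (S : lmodType R^c -> Prop) :=
  forall (I : Type) (F : I -> lmodType R^c) (D : lmodType R^c)
    (u : forall i, F i -> D), (forall i, S (F i)) -> @is_dsum I F D u -> S D.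

(* closed under submodules (= subobjects, i.e. sources of monomorphisms) *)
Definition closed_sub (S : lmodType R^c -> Prop) :=
  forall (V W : lmodType R^c) (f : W -> V), S V -> rlin f -> injective f -> S W.

(* E = End(M_R), with product s t := s \o t. *)
Definition isEnd (M : lmodType R^c) (s : M -> M) := rlin s.

Definition rEmod (M : lmodType R^c) (N : zmodType) (act : N -> (M -> M) -> N) :=
  (forall s, isEnd s -> forall n n', act (n + n') s = act n s + act n' s) /\
  (forall s t, isEnd s -> isEnd t -> forall n,
       act n (fun m => s m + t m) = act n s + act n t) /\
  (forall s t, isEnd s -> isEnd t -> forall n, act n (s \o t) = act (act n s) t) /\
  (forall n, act n id = n).

(* finitely presented right E-module: exact sequence E^b -> E^a -> N -> 0,
   generators g_j, relation rows r_k generating all relations *)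
Definition fin_pres (M : lmodType R^c) (N : zmodType) (act : N -> (M -> M) -> N) :=
  exists a b (g : 'I_a -> N) (r : 'I_b -> 'I_a -> M -> M),
    (forall k j, isEnd (r k j)) /\
    (forall n, exists e : 'I_a -> M -> M,
        (forall j, isEnd (e j)) /\ n = \sum_(j < a) act (g j) (e j)) /\
    (forall k, \sum_(j < a) act (g j) (r k j) = 0) /\
    (forall e : 'I_a -> M -> M, (forall j, isEnd (e j)) ->
        \sum_(j < a) act (g j) (e j) = 0 ->
        exists c : 'I_b -> M -> M, (forall k, isEnd (c k)) /\
          forall j, e j = (fun m => \sum_(k < b) r k j (c k m))).

(* E-linear maps N -> Hom_R(M, Y), where Hom_R(M,Y) is a right E-module via
   (phi . s)(m) = phi (s m) *)
Definition EhomToHom (M : lmodType R^c) (N : zmodType) (act : N -> (M -> M) -> N)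
    (Y : lmodType R^c) (f : N -> M -> Y) :=
  (forall n, rlin (f n)) /\
  (forall n n', f (n + n') = (fun m => f n m + f n' m)) /\
  (forall n s, isEnd s -> f (act n s) = f n \o s).

End Defs.
Arguments is_dsum {R I} F D u.

(* Main.v *)
From HB Require Import structures.
Require Import Defs.
From mathcomp Require Import all_boot all_order all_algebra.
From Stdlib Require Import ClassicalEpsilon FunctionalExtensionality Classical.
Set Implicit Arguments. Unset Strict Implicit. Unset Printing Implicit Defensive.
Import GRing.Theory.
Local Open Scope ring_scope.

Definition pb (P : Prop) : bool := if excluded_middle_informative P then true else false.
Lemma pbP (P : Prop) : reflect P (pb P).
Proof. by rewrite /pb; case: excluded_middle_informative => h; constructor. Qed.

Section Lin.
Variable R : nzRingType.
Implicit Types U V W : lmodType R^c.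

Lemma rlinD U V (f : U -> V) : rlin f -> forall x y, f (x + y) = f x + f y.
Proof. by move=> hf x y; have := hf 1 x y; rewrite !scale1r. Qed.
Lemma rlin0 U V (f : U -> V) : rlin f -> f 0 = 0.
Proof.
move=> hf; have h := rlinD hf 0 0; rewrite addr0 in h.
by move/(congr1 (fun z => z - f 0)): h; rewrite subrr addrK.
Qed.
Lemma rlinZ U V (f : U -> V) : rlin f -> forall a x, f (a *: x) = a *: f x.
Proof. by move=> hf a x; have := hf a x 0; rewrite !addr0 rlin0 // addr0. Qed.
Lemma rlinN U V (f : U -> V) : rlin f -> forall x, f (- x) = - f x.
Proof. by move=> hf x; rewrite -scaleN1r rlinZ // scaleN1r. Qed.
Lemma rlinB U V (f : U -> V) : rlin f -> forall x y, f (x - y) = f x - f y.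
Proof. by move=> hf x y; rewrite rlinD // rlinN. Qed.
Lemma rlin_sum U V (f : U -> V) I (s : seq I) (F : I -> U) : rlin f ->
  f (\sum_(i <- s) F i) = \sum_(i <- s) f (F i).
Proof.
move=> hf; elim: s => [|i s IH]; first by rewrite !big_nil rlin0.
by rewrite !big_cons rlinD // IH.
Qed.
Lemma rlin_comp U V W (f : V -> W) (g : U -> V) : rlin f -> rlin g -> rlin (f \o g).
Proof. by move=> hf hg a x y; rewrite /= hg hf. Qed.
Lemma rlin_id U : rlin (@id U). Proof. by []. Qed.

Section SM.
Variable W : lmodType R^c.
Variable D : W -> Prop.
Hypothesis hD : submod D.
Lemma sD0 : D 0. Proof. by case: hD. Qed.
Lemma sDZD a x y : D x -> D y -> D (a *: x + y). Proof. by case: hD => _; apply. Qed.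
Lemma sDD x y : D x -> D y -> D (x + y). Proof. by move=> hx hy; have := sDZD 1 hx hy; rewrite scale1r. Qed.
Lemma sDZ a x : D x -> D (a *: x). Proof. by move=> hx; have := sDZD a hx sD0; rewrite addr0. Qed.
Lemma sDN x : D x -> D (- x). Proof. by move=> hx; have := sDZ (-1) hx; rewrite scaleN1r. Qed.
Lemma sDB x y : D x -> D y -> D (x - y). Proof. by move=> hx hy; apply: sDD => //; apply: sDN. Qed.
Lemma sDsum I (s : seq I) (F : I -> W) : (forall i, D (F i)) -> D (\sum_(i <- s) F i).
Proof. move=> h; elim: s => [|i s IH]; rewrite ?big_nil ?big_cons; [exact: sD0| exact: sDD]. Qed.

Definition linon V (f : W -> V) := forall a x y, D x -> D y -> f (a *: x + y) = a *: f x + f y.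
Lemma linonD V (f : W -> V) : linon f -> forall x y, D x -> D y -> f (x + y) = f x + f y.
Proof. by move=> hf x y hx hy; have := hf 1 x y hx hy; rewrite !scale1r. Qed.
Lemma linon0 V (f : W -> V) : linon f -> f 0 = 0.
Proof.
move=> hf; have h := linonD hf sD0 sD0; rewrite addr0 in h.
by move/(congr1 (fun z => z - f 0)): h; rewrite subrr addrK.
Qed.
Lemma linonZ V (f : W -> V) : linon f -> forall a x, D x -> f (a *: x) = a *: f x.
Proof. by move=> hf a x hx; have := hf a x 0 hx sD0; rewrite !addr0 linon0 // addr0. Qed.
Lemma linonN V (f : W -> V) : linon f -> forall x, D x -> f (- x) = - f x.
Proof. by move=> hf x hx; rewrite -scaleN1r linonZ // scaleN1r. Qed.
Lemma linonB V (f : W -> V) : linon f -> forall x y, D x -> D y -> f (x - y) = f x - f y.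
Proof. by move=> hf x y hx hy; rewrite linonD ?linonN //; apply: sDN. Qed.
Lemma rlin_linon V (f : W -> V) : rlin f -> linon f.
Proof. by move=> hf a x y _ _; apply: hf. Qed.
End SM.

Section Span.
Variable W : lmodType R^c.
Fixpoint in_span (G : seq W) (v : W) : Prop :=
  match G with [::] => v = 0 | g :: G' => exists r : R^c, in_span G' (v - r *: g) end.

Lemma span_sub G : submod (in_span G).
Proof.
elim: G => [|g G [IH0 IH]] /=; first by split => // a x y -> ->; rewrite scaler0 addr0.
split; first by exists 0; rewrite scale0r subr0.
move=> a x y [r hr] [r' hr']; exists (a * r + r').
have -> : a *: x + y - (a * r + r') *: g = a *: (x - r *: g) + (y - r' *: g).
  by rewrite scalerDl -scalerA scalerBr opprD addrACA addrA.
exact: IH.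
Qed.

Lemma span_cons g G v : in_span G v -> in_span (g :: G) v.
Proof. by move=> h; exists 0; rewrite scale0r subr0. Qed.
Lemma span_head g G : in_span (g :: G) g.
Proof. by exists 1; rewrite scale1r subrr; case: (span_sub G). Qed.

Lemma span_mono G G' : (forall g, g \in G -> in_span G' g) ->
  forall v, in_span G v -> in_span G' v.
Proof.
elim: G => [|g G IH] hG v /=; first by move=> ->; case: (span_sub G').
case=> r hr; have -> : v = r *: g + (v - r *: g) by rewrite addrC subrK.
apply: (sDZD (span_sub G')); first by apply: hG; rewrite inE eqxx.
by apply: IH => // g' hg'; apply: hG; rewrite inE hg' orbT.
Qed.

Lemma span_mem G g : g \in G -> in_span G g.
Proof.
elim: G => [|h G IH] //= ; rewrite inE => /orP [/eqP ->|hg].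
  exact: span_head.
by apply: span_cons; apply: IH.
Qed.

Lemma span_catl G G' v : in_span G v -> in_span (G ++ G') v.
Proof. by apply: span_mono => g hg; apply: span_mem; rewrite mem_cat hg. Qed.
Lemma span_catr G G' v : in_span G' v -> in_span (G ++ G') v.
Proof. by apply: span_mono => g hg; apply: span_mem; rewrite mem_cat hg orbT. Qed.

Lemma fin_gen_span : fin_gen W -> exists G, forall v, in_span G v.
Proof.
case=> n [g hg]; exists [seq g i | i <- enum 'I_n] => v.
have [r ->] := hg v; apply: (sDsum (span_sub _)) => i.
apply: (sDZ (span_sub _)); apply: span_mem; apply: map_f; by rewrite mem_enum.
Qed.

Lemma span_sum G v : in_span G v ->
  exists r : nat -> R^c, v = \sum_(k < size G) r k *: nth 0 G k.
Proof.
elim: G v => [|g G IH] v /=.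
  by move=> ->; exists (fun _ => 0); rewrite big_ord0.
case=> r /IH [r' hr']; exists (fun k => if k is k'.+1 then r' k' else r).
rewrite big_ord_recl /=; apply/eqP; rewrite addrC -subr_eq hr'; apply/eqP.
by apply: eq_bigr => i _.
Qed.

Lemma span_fin_gen G : (forall v, in_span G v) -> fin_gen W.
Proof.
move=> hG; exists (size G), (fun k => nth 0 G k) => v.
by have [r hr] := span_sum (hG v); exists (fun k => r k).
Qed.
End Span.
Lemma span_image W V (f : W -> V) G (D : W -> Prop) : submod D -> linon D f ->
  (forall g, g \in G -> D g) ->
  forall v, in_span G v -> D v -> in_span (map f G) (f v).
Proof.
move=> hD hf; elim: G => [|g G IH] hG v /=.
  by move=> -> _; rewrite (linon0 hD hf).
have hg : D g by apply: hG; rewrite inE eqxx.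
case=> r hr hv; exists r.
have hrg : D (r *: g) := sDZ hD r hg.
rewrite -(linonZ hD hf r hg) -(linonB hD hf hv hrg).
apply: IH => //; last exact: sDB.
by move=> g' hg'; apply: hG; rewrite inE hg' orbT.
Qed.

End Lin.
Section Sub.
Variable R : nzRingType.
Variable W : lmodType R^c.
Variable D : W -> Prop.
Variable hD : submod D.

Definition subm_ of submod D := {w : W | pb (D w)}.
Local Notation subm := (subm_ hD).
HB.instance Definition _ := [Choice of subm by <:].

Definition sm0 : subm := exist _ 0 (introT (pbP _) (sD0 hD)).
Definition smadd (x y : subm) : subm := exist _ (val x + val y)
  (introT (pbP _) (sDD hD (elimT (pbP _) (valP x)) (elimT (pbP _) (valP y)))).
Definition smopp (x : subm) : subm := exist _ (- val x)
  (introT (pbP _) (sDN hD (elimT (pbP _) (valP x)))).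
Definition smscale (a : R^c) (x : subm) : subm := exist _ (a *: val x)
  (introT (pbP _) (sDZ hD a (elimT (pbP _) (valP x)))).

Lemma smaddA : associative smadd. Proof. by move=> x y z; apply: val_inj; rewrite /= addrA. Qed.
Lemma smaddC : commutative smadd. Proof. by move=> x y; apply: val_inj; rewrite /= addrC. Qed.
Lemma smadd0 : left_id sm0 smadd. Proof. by move=> x; apply: val_inj; rewrite /= add0r. Qed.
Lemma smaddN : left_inverse sm0 smopp smadd. Proof. by move=> x; apply: val_inj; rewrite /= addNr. Qed.
HB.instance Definition _ := GRing.isZmodule.Build subm smaddA smaddC smadd0 smaddN.
Lemma smscaleA a b (v : subm) : smscale a (smscale b v) = smscale (a * b) v.
Proof. by apply: val_inj; rewrite /= scalerA. Qed.
Lemma smscale1 : left_id 1 smscale. Proof. by move=> x; apply: val_inj; rewrite /= scale1r. Qed.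
Lemma smscaleDr : right_distributive smscale +%R. Proof. by move=> a x y; apply: val_inj; rewrite /= scalerDr. Qed.
Lemma smscaleDl (v : subm) : {morph smscale^~ v : a b / a + b}.
Proof. by move=> a b; apply: val_inj; rewrite /= scalerDl. Qed.
HB.instance Definition _ := GRing.Zmodule_isLmodule.Build R^c subm smscaleA smscale1 smscaleDr smscaleDl.
End Sub.
Section DCC.
Variable R : nzRingType.
Hypothesis hart : artinian R.
Variable W : lmodType R^c.

Lemma chain_le (C : nat -> W -> Prop) : (forall t x, C t.+1 x -> C t x) ->
  forall s t x, (s <= t)%N -> C t x -> C s x.
Proof.
move=> hC s t x; elim: t => [|t IH]; first by rewrite leqn0 => /eqP ->.
rewrite leq_eqVlt => /orP [/eqP -> //| hst] h; apply: IH => //; exact: hC.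
Qed.

Lemma dcc G (C : nat -> W -> Prop) : (forall t, submod (C t)) ->
  (forall t x, C t.+1 x -> C t x) -> (forall t x, C t x -> in_span G x) ->
  exists N, forall t x, (N <= t)%N -> (C t x <-> C N x).
Proof.
elim: G C => [|g G IH] C hsub hC hG.
  exists 0%N => t x _; split => h; first by rewrite (hG _ _ h); exact: sD0.
  by rewrite (hG _ _ h); exact: sD0.
pose Cr t x := C t x /\ in_span G x.
have [N1 hN1] : exists N, forall t x, (N <= t)%N -> (Cr t x <-> Cr N x).
  apply: IH.
  - move=> t; split; first by split; [exact: sD0|case: (span_sub G)].
    move=> a x y [hx1 hx2] [hy1 hy2]; split; first exact: sDZD.
    exact: (sDZD (span_sub G)).
  - by move=> t x [h1 h2]; split => //; apply: hC.
  - by move=> t x [].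
pose I t (r : R) := exists c, C t c /\ in_span G (c - (r : R^c) *: g).
have [N2 hN2] : exists N, forall m x, (N <= m)%N -> (I m x <-> I N x).
  apply: hart.1.
  - move=> t; split; first by exists 0; rewrite scale0r subr0; split; [exact: sD0|case: (span_sub G)].
    split.
    + move=> x y [c [hc1 hc2]] [c' [hc1' hc2']]; exists (c + c'); split; first exact: sDD.
      have -> : c + c' - ((x + y : R) : R^c) *: g = (c - (x : R^c) *: g) + (c' - (y : R^c) *: g).
        by rewrite scalerDl opprD addrACA.
      exact: (sDD (span_sub G)).
    + move=> x r [c [hc1 hc2]]; exists ((r : R^c) *: c); split; first exact: sDZ.
      have -> : (r : R^c) *: c - ((x * r : R) : R^c) *: g = (r : R^c) *: (c - (x : R^c) *: g).
        by rewrite scalerBr scalerA.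
      exact: (sDZ (span_sub G)).
  - by move=> t x [c [h1 h2]]; exists c; split => //; apply: hC.
exists (maxn N1 N2) => t x ht; split; first by apply: chain_le.
move=> hx; have := hG _ _ hx => -[r hr].
have hIN : I (maxn N1 N2) r by exists x.
have : I t r.
  apply: (proj2 (hN2 t r (leq_trans (leq_maxr _ _) ht))).
  exact: (proj1 (hN2 _ r (leq_maxr _ _)) hIN).
case=> c [hc1 hc2].
have hxc : Cr (maxn N1 N2) (x - c).
  split; first by apply: (sDB (hsub _)) => //; apply: chain_le hc1.
  have -> : x - c = (x - r *: g) - (c - r *: g) by rewrite opprB addrA subrK.
  exact: (sDB (span_sub G)).
have : Cr t (x - c).
  apply: (proj2 (hN1 t _ (leq_trans (leq_maxl _ _) ht))).
  exact: (proj1 (hN1 _ _ (leq_maxl _ _)) hxc).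
case=> h1 _; have -> : x = (x - c) + c by rewrite subrK.
exact: (sDD (hsub t)).
Qed.

Lemma wf_dcc G (bad : (W -> Prop) -> Prop) :
  (forall D, bad D -> submod D /\ (forall x, D x -> in_span G x)) ->
  (forall D, bad D -> exists D', bad D' /\ (forall x, D' x -> D x) /\ exists x, D x /\ ~ D' x) ->
  forall D, ~ bad D.
Proof.
move=> hb hstep D0 hD0.
pose nx (D : {D | bad D}) : {D | bad D} :=
  let e := constructive_indefinite_description _ (hstep _ (svalP D)) in
  exist _ (sval e) (proj1 (svalP e)).
have hnx : forall D, (forall x, sval (nx D) x -> sval D x) /\ exists x, sval D x /\ ~ sval (nx D) x.
  by move=> D; rewrite /nx; case: constructive_indefinite_description => /= D' [_ h].
pose ch := fix ch t := if t is t'.+1 then nx (ch t') else exist _ D0 hD0.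
have [N hN] := dcc (C := fun t => sval (ch t)) (fun t => (hb _ (svalP (ch t))).1)
   (fun t => (hnx (ch t)).1) (fun t => (hb _ (svalP (ch t))).2).
have [x [hx1 hx2]] := (hnx (ch N)).2.
by apply: hx2; apply: (proj2 (hN N.+1 x (leqnSn N))).
Qed.
End DCC.
Section DSum.
Local Unset Implicit Arguments.
Variable R : nzRingType.
Variable n : nat.
Variable Ms : 'I_n -> lmodType R^c.
Variable M : lmodType R^c.
Variable iM : forall i, Ms i -> M.
Hypothesis hM : is_dsum Ms M iM.

Definition tr (j i : 'I_n) (x : Ms j) : Ms i :=
  match j =P i with ReflectT e => eq_rect j Ms x i e | ReflectF _ => 0 end.

Arguments tr j i x : clear implicits.
Lemma iM_tr j i x : iM i (tr j i x) = if j == i then iM j x else 0.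
Proof.
rewrite /tr; case: eqP => [e|_]; first by subst.
by rewrite (rlin0 (hM.1 i)).
Qed.

Lemma tr_id i x : tr i i x = x.
Proof.
rewrite /tr; case: eqP => // e.
by rewrite (eq_irrelevance e (erefl i)).
Qed.

Lemma sum_if (j : 'I_n) (A : M) : \sum_(i < n) (if j == i then A else 0) = A.
Proof. by rewrite -big_mkcond /=; apply: big_pred1 => i; rewrite /= eq_sym. Qed.

Lemma decomp m : exists y : forall i, Ms i, m = \sum_(i < n) iM i (y i).
Proof.
have [N [iota [x ->]]] := hM.2.1 m.
exists (fun i => \sum_(k < N) tr (iota k) i (x k)).
rewrite (eq_bigr (fun i => \sum_(k < N) iM i (tr (iota k) i (x k)))); last first.
  by move=> i _; rewrite (rlin_sum _ _ (hM.1 i)).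
rewrite exchange_big /=; apply: eq_bigr => k _.
under eq_bigr do rewrite iM_tr.
by rewrite sum_if.
Qed.

Lemma decomp_uniq (y y' : forall i, Ms i) :
  \sum_(i < n) iM i (y i) = \sum_(i < n) iM i (y' i) -> forall i, y i = y' i.
Proof.
move=> h i; apply/eqP; rewrite -subr_eq0; apply/eqP.
have inj : injective (fun k : 'I_n => k) by [].
apply: (hM.2.2 n (fun k => k) (fun k => y k - y' k) inj).
under eq_bigr do rewrite (rlinB (hM.1 _)).
by rewrite sumrB h subrr.
Qed.

Definition piM (i : 'I_n) (m : M) : Ms i :=
  sval (constructive_indefinite_description _ (decomp m)) i.

Lemma piM_spec m : m = \sum_(i < n) iM i (piM i m).
Proof. by rewrite /piM; case: constructive_indefinite_description. Qed.

Lemma piM_uniq (y : forall i, Ms i) m : m = \sum_(i < n) iM i (y i) -> forall i, piM i m = y i.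
Proof. by move=> h; apply: decomp_uniq; rewrite -piM_spec. Qed.

Lemma piM_rlin i : rlin (piM i).
Proof.
move=> a x y.
apply: (piM_uniq (fun j => a *: piM j x + piM j y) (a *: x + y)).
under eq_bigr do rewrite (hM.1 _).
by rewrite big_split /= -scaler_sumr -!piM_spec.
Qed.

Lemma piM_iM i x : piM i (iM i x) = x.
Proof.
rewrite (piM_uniq (fun j => tr i j x)) ?tr_id //.
by under eq_bigr do rewrite iM_tr; rewrite sum_if.
Qed.

Hypothesis hMsfg : forall i, fin_gen (Ms i).

Lemma M_span : exists GM : seq M, forall m, in_span GM m.
Proof.
have hG i : {G : seq (Ms i) | forall v, in_span G v}.
  exact: constructive_indefinite_description (fin_gen_span (hMsfg i)).
exists (flatten [seq map (iM i) (sval (hG i)) | i <- enum 'I_n]) => m.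
rewrite (piM_spec m); apply: (sDsum (span_sub _)) => i.
have hT : submod (fun _ : Ms i => True) by [].
have := span_image hT (rlin_linon (D := fun _ => True) (hM.1 i)) (fun _ _ => I) (svalP (hG i) (piM i m)) I.
apply: span_mono => g hg; apply: span_mem; apply/flatten_mapP; exists i => //.
by rewrite mem_enum.
Qed.
End DSum.
Section KS.
Local Unset Implicit Arguments.
Variable R : nzRingType.
Hypothesis hart : artinian R.
Variable S : lmodType R^c -> Prop.
Hypothesis hsub : closed_sub S.
Variable n : nat.
Variable Ms : 'I_n -> lmodType R^c.
Hypothesis hMsall : forall V : lmodType R^c, S V -> fin_gen V -> indecomposable V ->
             exists i, riso V (Ms i).
Variable M : lmodType R^c.
Variable iM : forall i, Ms i -> M.
Hypothesis hM : is_dsum Ms M iM.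
Variable W : lmodType R^c.
Hypothesis hW : S W.
Variable G : seq W.
Notation Y0 := (in_span G).

Definition sumin (D : W -> Prop) := submod D /\ exists C, submod C /\
  (forall v, D v -> C v -> v = 0) /\
  (forall v, Y0 v <-> exists a c, D a /\ C c /\ v = a + c).

Definition good (D : W -> Prop) (pr : (W -> M) * (M -> W)) :=
  linon D pr.1 /\ rlin pr.2 /\ (forall m, D (pr.2 m)).

Definition QQ (D : W -> Prop) := exists s, List.Forall (good D) s /\
  forall w, D w -> w = \sum_(pr <- s) pr.2 (pr.1 w).

Lemma sumin_Y0 D : sumin D -> forall v, D v -> Y0 v.
Proof.
case=> hD [C [hC [_ hcov]]] v hv; apply/hcov; exists v, 0; split => //.
by split; [exact: sD0 | rewrite addr0].
Qed.

Lemma sumin_proj D C : submod D -> submod C -> (forall v, D v -> C v -> v = 0) ->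
  (forall v, Y0 v <-> exists a c, D a /\ C c /\ v = a + c) ->
  exists pi : W -> W, linon Y0 pi /\ (forall v, Y0 v -> D (pi v)) /\
    (forall a c, D a -> C c -> pi (a + c) = a).
Proof.
move=> hD hC disj cov.
have uq : forall a c a' c', D a -> C c -> D a' -> C c' -> a + c = a' + c' -> a = a'.
  move=> a c a' c' ha hc ha' hc' e; apply/eqP; rewrite -subr_eq0; apply/eqP.
  apply: disj; first exact: sDB.
  have -> : a - a' = c' - c.
    have -> : a = a' + c' - c by rewrite -e addrK.
    by rewrite addrAC [a' + c']addrC addrK.
  exact: sDB.
pose pi v := match excluded_middle_informative (exists a, D a /\ exists c, C c /\ v = a + c) with
  | left h => sval (constructive_indefinite_description _ h) | right _ => 0 end.
have spec : forall v, Y0 v -> D (pi v) /\ exists c, C c /\ v = pi v + c.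
  move=> v /cov [a [c [ha [hc e]]]]; rewrite /pi.
  case: excluded_middle_informative => [h|h]; last by exfalso; apply: h; exists a; split => //; exists c.
  by case: constructive_indefinite_description.
have pac : forall a c, D a -> C c -> pi (a + c) = a.
  move=> a c ha hc; have hv : Y0 (a + c) by apply/cov; exists a, c.
  have [h1 [c' [h2 e]]] := spec _ hv; symmetry; exact: uq e.
exists pi; split; last split => //; last by move=> v /spec [].
move=> a x y hx hy.
have [hx1 [cx [hx2 ex]]] := spec _ hx; have [hy1 [cy [hy2 ey]]] := spec _ hy.
have -> : a *: x + y = (a *: pi x + pi y) + (a *: cx + cy).
  by rewrite {1}ex {1}ey scalerDr addrACA.
by rewrite pac //; [exact: sDZD | exact: sDZD].
Qed.

Lemma QQ_comb D A B piA piB : (forall v, D v -> Y0 v) ->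
  linon Y0 piA -> (forall v, Y0 v -> A (piA v)) ->
  linon Y0 piB -> (forall v, Y0 v -> B (piB v)) ->
  (forall x, A x -> D x) -> (forall x, B x -> D x) ->
  (forall v, D v -> v = piA v + piB v) -> QQ A -> QQ B -> QQ D.
Proof.
move=> hDY hlA hA hlB hB hAD hBD hsplit [sA [gA eA]] [sB [gB eB]].
exists (map (fun pr => (pr.1 \o piA, pr.2)) sA ++ map (fun pr => (pr.1 \o piB, pr.2)) sB).
split.
  apply/List.Forall_app; split; apply/List.Forall_map.
    apply: List.Forall_impl gA => -[f g] [h1 [h2 h3]]; split; last split => //=.
      move=> a x y hx hy /=; rewrite hlA; [|exact: hDY|exact: hDY].
      exact: (h1 a _ _ (hA _ (hDY _ hx)) (hA _ (hDY _ hy))).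
    by move=> m; apply: hAD.
  apply: List.Forall_impl gB => -[f g] [h1 [h2 h3]]; split; last split => //=.
    move=> a x y hx hy /=; rewrite hlB; [|exact: hDY|exact: hDY].
    exact: (h1 a _ _ (hB _ (hDY _ hx)) (hB _ (hDY _ hy))).
  by move=> m; apply: hBD.
move=> w hw; rewrite big_cat !big_map /=.
rewrite -(eA _ (hA _ (hDY _ hw))) -(eB _ (hB _ (hDY _ hw))).
exact: hsplit.
Qed.

Lemma rlin_inv (U V : lmodType R^c) (f : U -> V) (g : V -> U) : rlin f -> cancel f g -> cancel g f -> rlin g.
Proof.
move=> hf fK gK a x y; apply: (can_inj fK).
by rewrite hf !gK.
Qed.

Lemma main_KS : forall D, sumin D -> QQ D.
Proof.
move=> D0 hD0; apply: NNPP => hnq.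
have hwf := @wf_dcc R hart W G (fun D => sumin D /\ ~ QQ D).
apply: (hwf _ _ D0 (conj hD0 hnq)).
  by move=> D [hD _]; split; [exact: hD.1 | exact: sumin_Y0].
move=> D [hD hnD]; apply: NNPP => hno.
have hnb : forall D', sumin D' -> (forall x, D' x -> D x) -> (exists x, D x /\ ~ D' x) -> QQ D'.
  move=> D' h1 h2 h3; apply: NNPP => h4; apply: hno; exists D'; split => //; split => //.
case: (hD) => hDs [C [hCs [disj cov]]].
have [piD [hlD [hpD hpacD]]] := sumin_proj D C hDs hCs disj cov.
have hDY := sumin_Y0 D hD.
have [v0 [hv0 nz0]] : exists v, D v /\ v <> 0.
  apply: NNPP => h; apply: hnD; exists [::]; split => // w hw; rewrite big_nil.
  by apply: NNPP => hw0; apply: h; exists w.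
pose Dt := subm_ hDs.
pose mkD v (h : D v) : Dt := exist _ v (introT (pbP _) h).
have vmk : forall v h, val (mkD v h) = v by [].
have hvD : forall d : Dt, D (val d) by move=> d; apply/pbP; exact: (valP d).
pose toD v : Dt := match excluded_middle_informative (D v) with left h => mkD v h | right _ => 0 end.
have toDv : forall v, D v -> val (toD v) = v.
  by move=> v hv; rewrite /toD; case: excluded_middle_informative.
have toDval : forall d : Dt, toD (val d) = d by move=> d; apply: val_inj; rewrite toDv.
have hltoD : linon D toD.
  move=> a x y hx hy; apply: val_inj; rewrite /= toDv; last exact: sDZD.
  by rewrite !toDv.
have hSDt : S Dt.
  apply: (hsub W Dt val hW); last exact: val_inj.
  by [].
have hfgDt : fin_gen Dt.
  apply: (span_fin_gen (G := map (fun v => toD (piD v)) G)) => d.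
  have hl : linon Y0 (fun v => toD (piD v)).
    move=> a x y hx hy /=; rewrite hlD // hltoD //; exact: hpD.
  have := span_image (span_sub G) hl (fun g hg => span_mem hg) (hDY _ (hvD d)) (hDY _ (hvD d)).
  have -> // : toD (piD (val d)) = d.
  rewrite -[val d]addr0 hpacD ?toDval //; try exact: hvD; exact: (sD0 hCs).
have hind : indecomposable Dt.
  split; first by exists (mkD v0 hv0) => e; apply: nz0; rewrite -(vmk v0 hv0) e.
  move=> A' B' hA' hB' disjAB covAB; apply: NNPP => hnot.
  have [hnA hnB] := not_or_and _ _ hnot.
  have part : forall A' B' : Dt -> Prop, submod A' -> submod B' ->
      (forall v, A' v -> B' v -> v = 0) -> (forall v, exists a b, A' a /\ B' b /\ v = a + b) ->
      ~ (forall v, B' v -> v = 0) ->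
      exists A pi, sumin A /\ (forall x, A x -> D x) /\ (exists x, D x /\ ~ A x) /\
        linon Y0 pi /\ (forall v, Y0 v -> A (pi v)) /\
        (forall a b, A' a -> B' b -> pi (val a + val b) = val a) /\
        (forall a, A' a -> A (val a)).
    move=> A1 B1 hA1 hB1 dj cv nB.
    have [b0 [hb0 nzb0]] : exists b, B1 b /\ b <> 0.
      have [b hb] := not_all_ex_not _ _ nB; have [h1 h2] := imply_to_and _ _ hb.
      by exists b.
    pose A v := exists h : D v, A1 (mkD v h).
    have hAv : forall a, A1 a -> A (val a).
      by move=> a ha; exists (hvD a); rewrite (_ : mkD _ _ = a) //; apply: val_inj.
    have hAD : forall x, A x -> D x by move=> x [h _].
    have hAmk : forall x (h : D x), A x -> A1 (mkD x h).
      by move=> x h [h' ha]; rewrite (_ : mkD x h = mkD x h') //; apply: val_inj.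
    have hAs : submod A.
      split.
        exists (sD0 hDs); rewrite (_ : mkD _ _ = 0); first exact: (sD0 hA1).
        exact: val_inj.
      move=> a x y hx hy; have hxD := hAD _ hx; have hyD := hAD _ hy.
      exists (sDZD hDs a hxD hyD).
      rewrite (_ : mkD _ _ = a *: mkD x hxD + mkD y hyD); last by apply: val_inj.
      by apply: sDZD => //; apply: hAmk.
    pose CA v := exists b c, B1 b /\ C c /\ v = val b + c.
    have hCAs : submod CA.
      split; first by exists 0, 0; split; [exact: sD0|split; [exact: sD0|rewrite addr0]].
      move=> a x y [b [c [hb [hc ->]]]] [b' [c' [hb' [hc' ->]]]].
      exists (a *: b + b'), (a *: c + c'); split; first exact: sDZD.
      split; first exact: sDZD.
      by rewrite /= scalerDr addrACA.
    have djA : forall v, A v -> CA v -> v = 0.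
      move=> v hv [b [c [hb [hc e]]]].
      have hvD' := hAD _ hv.
      have hc0 : c = 0.
        apply: disj => //; have -> : c = v - val b by rewrite e addrC addKr.
        exact: sDB.
      move: e; rewrite hc0 addr0 => e.
      have : mkD v hvD' = 0.
        apply: dj; first exact: hAmk.
        by rewrite (_ : mkD v hvD' = b) //; apply: val_inj.
      by move/(congr1 val).
    have covA : forall v, Y0 v <-> exists a c, A a /\ CA c /\ v = a + c.
      move=> v; split.
        move/cov => [d [c [hd [hc ->]]]].
        have [a [b [ha [hb e]]]] := cv (mkD d hd).
        exists (val a), (val b + c); split; first exact: hAv.
        split; first by exists b, c.
        by rewrite addrA -[d](vmk d hd) e.
      move=> [a [c' [ha [[b [c [hb [hc ->]]]] ->]]]]; apply/cov.
      exists (a + val b), c; split; first by apply: sDD => //; apply: hAD.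
      by split => //; rewrite addrA.
    have hsA : sumin A by split => //; exists CA.
    have [pi [hl [hp hpac]]] := sumin_proj A CA hAs hCAs djA covA.
    exists A, pi; split => //; split => //; split.
      exists (val b0); split; first exact: hvD.
      move=> hA0; apply: nzb0; apply: dj => //.
      by rewrite (_ : b0 = mkD _ (hvD b0)); [apply: hAmk | apply: val_inj].
    split => //; split => //; split => // a b ha hb.
    apply: hpac; first exact: hAv.
    by exists b, 0; split => //; split; [exact: sD0| rewrite addr0].
  have [A [piA [hsA [hAD [hAstr [hlA [hpA [hpacA hAv]]]]]]]] := part A' B' hA' hB' disjAB covAB hnB.
  have [B [piB [hsB [hBD [hBstr [hlB [hpB [hpacB hBv]]]]]]]] :=
    part B' A' hB' hA' (fun v hb ha => disjAB v ha hb)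
      (fun v => let: ex_intro a (ex_intro b (conj ha (conj hb e))) := covAB v in
         ex_intro _ b (ex_intro _ a (conj hb (conj ha (etrans e (addrC a b)))))) hnA.
  apply: hnD; apply: (QQ_comb D A B piA piB hDY hlA hpA hlB hpB hAD hBD).
  - move=> v hv; have [a [b [ha [hb e]]]] := covAB (mkD v hv).
    have -> : v = val a + val b by rewrite -[v](vmk v hv) e.
    by rewrite hpacA // addrC hpacB // addrC.
  - exact: hnb.
  - exact: hnb.
have [i [f [hf [finv fK gK]]]] := hMsall Dt hSDt hfgDt hind.
apply: hnD.
exists [:: (fun v => iM i (f (toD v)), fun m => val (finv (piM _ _ _ _ _ hM i m)))]; split.
  apply: List.Forall_cons => //; split; last split => /=.
  - move=> a x y hx hy /=; rewrite hltoD // hf (hM.1 i) //.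
  - apply: rlin_comp => //; apply: rlin_comp; first exact: rlin_inv hf fK gK.
    exact: piM_rlin.
  - by move=> m; apply: hvD.
move=> w hw; rewrite big_seq1 /= piM_iM fK toDv //.
Qed.
End KS.
Section Final.
Variable R : nzRingType.
Variable M X : lmodType R^c.

Lemma rlin_zero : rlin (fun _ : M => (0 : X)).
Proof. by move=> a x y; rewrite scaler0 addr0. Qed.

Definition mkH (h : M -> X) : {h : M -> X | rlin h} :=
  match excluded_middle_informative (rlin h) with
  | left H => exist _ h H | right _ => exist _ (fun _ => 0) rlin_zero end.

Lemma mkHE h : rlin h -> sval (mkH h) = h.
Proof. by move=> H; rewrite /mkH; case: excluded_middle_informative. Qed.
End Final.

Theorem lemma11 (R : nzRingType) (S : lmodType R^c -> Prop)
  (hart : artinian R) (hds : closed_dsum S) (hsub : closed_sub S)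
  (hR : S (R^c)^o)
  (n : nat) (Ms : 'I_n -> lmodType R^c)
  (hMsS : forall i, S (Ms i)) (hMsfg : forall i, fin_gen (Ms i))
  (hMsind : forall i, indecomposable (Ms i))
  (hMsdist : forall i j, i <> j -> ~ riso (Ms i) (Ms j))
  (hMsall : forall V : lmodType R^c, S V -> fin_gen V -> indecomposable V ->
             exists i, riso V (Ms i))
  (M : lmodType R^c) (iM : forall i, Ms i -> M) (hM : is_dsum Ms M iM)
  (X : lmodType R^c) (hX : S X)
  (P : lmodType R^c) (u : {h : M -> X | rlin h} -> M -> P)
  (hP : is_dsum (fun _ => M) P u)
  (p : P -> X) (hp : rlin p) (hpu : forall h m, p (u h m) = sval h m)
  (K : lmodType R^c) (k : K -> P) (hk : rlin k) (hkinj : injective k)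
  (hker : forall y, p y = 0 <-> exists z, k z = y) :
  (* exactness of 0 -> Hom(M,K) -> Hom(M,P) -> Hom(M,X) -> 0 *)
  (forall phi phi' : M -> K, rlin phi -> rlin phi' -> k \o phi = k \o phi' -> phi = phi') /\
  (forall phi : M -> K, rlin phi -> p \o (k \o phi) = (fun _ => 0)) /\
  (forall psi : M -> P, rlin psi -> p \o psi = (fun _ => 0) ->
     exists phi : M -> K, rlin phi /\ k \o phi = psi) /\
  (forall phi : M -> X, rlin phi -> exists psi : M -> P, rlin psi /\ p \o psi = phi) /\
  (* purity: Hom_E(N, Hom(M,p)) surjective for every f.p. right E-module N *)
  (forall (N : zmodType) (act : N -> (M -> M) -> N),
     rEmod act -> fin_pres act ->
     forall f : N -> M -> X, EhomToHom act f ->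
     exists f' : N -> M -> P, EhomToHom act f' /\ forall x, p \o f' x = f x).
Proof.
split.
  move=> phi phi' _ _ e; apply: functional_extensionality => m.
  by apply: hkinj; exact: (congr1 (fun F => F m) e).
split.
  move=> phi _; apply: functional_extensionality => m /=.
  by apply/hker; exists (phi m).
split.
  move=> psi hpsi e.
  have hex : forall m, exists z, k z = psi m.
    by move=> m; apply/hker; exact: (congr1 (fun F => F m) e).
  pose phi m := sval (constructive_indefinite_description _ (hex m)).
  have hphi : forall m, k (phi m) = psi m.
    by move=> m; rewrite /phi; case: constructive_indefinite_description.
  exists phi; split; last by apply: functional_extensionality => m; exact: hphi.
  by move=> a x y; apply: hkinj; rewrite hk !hphi hpsi.
split.
  move=> phi hphi; exists (u (exist _ phi hphi)); split; first exact: hP.1.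
  by apply: functional_extensionality => m /=; rewrite hpu.
move=> N act hact [a [b [g [r [hr [hgen _]]]]]] f [hf1 [hf2 hf3]].
have [GM hGM] := M_span _ _ _ _ _ hM hMsfg.
pose G0 := flatten [seq map (f (g j)) GM | j <- enum 'I_a].
have f0 : forall m, f 0 m = 0.
  move=> m; have := congr1 (fun F => F m) (hf2 0 0); rewrite addr0 /= => h.
  by move/(congr1 (fun z => z - f 0 m)): h; rewrite subrr addrK.
have fsum : forall (s : seq 'I_a) F m, f (\sum_(j <- s) F j) m = \sum_(j <- s) f (F j) m.
  move=> s F m; elim: s => [|j s IH]; first by rewrite !big_nil f0.
  by rewrite !big_cons hf2 IH.
have hfY : forall x m, in_span G0 (f x m).
  move=> x m; have [e [he ->]] := hgen x.
  rewrite fsum; apply: (sDsum (span_sub _)) => j; rewrite hf3 //=.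
  have hT : submod (fun _ : M => True) by [].
  have := span_image hT (rlin_linon (D := fun _ => True) (hf1 (g j))) (fun _ _ => I) (hGM (e j m)) I.
  apply: span_mono => y hy; apply: span_mem; apply/flatten_mapP; exists j => //.
  by rewrite mem_enum.
have hsum : sumin _ _ G0 (in_span G0).
  split; first exact: span_sub.
  exists (fun v => v = 0); split; first by split => // c x y -> ->; rewrite scaler0 addr0.
  split; first by [].
  move=> v; split; first by move=> hv; exists v, 0; rewrite addr0.
  by move=> [x [c [hx [-> ->]]]]; rewrite addr0.
have [s [hgood hid]] := main_KS _ hart _ hsub _ _ hMsall _ _ hM _ hX _ _ hsum.
pose L w := \sum_(pr <- s) u (mkH pr.2) (pr.1 w).
have hL : forall s', List.Forall (good _ _ _ (in_span G0)) s' ->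
    linon (in_span G0) (fun w => \sum_(pr <- s') u (mkH pr.2) (pr.1 w)) /\
    forall w, p (\sum_(pr <- s') u (mkH pr.2) (pr.1 w)) = \sum_(pr <- s') pr.2 (pr.1 w).
  elim=> [|pr s' IH] hs.
    by split; [move=> c x y _ _; rewrite !big_nil scaler0 addr0 | move=> w; rewrite !big_nil (rlin0 hp)].
  have [hpr1 [hpr2 _]] := List.Forall_inv hs.
  have [IH1 IH2] := IH (List.Forall_inv_tail hs).
  split.
    move=> c x y hx hy; rewrite !big_cons hpr1 // (hP.1 _) IH1 //.
    by rewrite scalerDr addrACA.
  by move=> w; rewrite !big_cons (rlinD hp) hpu mkHE // IH2.
have [hL1 hL2] := hL s hgood.
exists (fun x m => L (f x m)); split; last first.
  move=> x; apply: functional_extensionality => m /=.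
  by rewrite /L hL2 -hid.
split; first by move=> x c m m'; rewrite hf1; exact: (hL1 c _ _ (hfY x m) (hfY x m')).
split; first by move=> x x'; apply: functional_extensionality => m; rewrite hf2 /=; exact: (linonD hL1 (hfY x m) (hfY x' m)).
by move=> x t ht; rewrite hf3.
Qed.
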